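(* Let $\mathcal E$ be a semilattice with zero, $\mathbf K$ a field, $A$ an associative $\mathbf K$-algebra, and $\pi:\mathcal E\to A$ a map with $\pi(0)=0$ and $\pi(xy)=\pi(x)\pi(y)$ for all $x,y$, such that $A$ is generated as an algebra by $\pi(\mathcal E)$. Then (i) the spectrum $\hat A$ of $A$ is homeomorphic to the space $\hat{\mathcal E}_\pi$ of $\pi$-tight characters of $\mathcal E$; (ii) $A$ is isomorphic to the algebra $C_c(\hat{\mathcal E}_\pi,\mathbf K)$ of all locally constant, compactly supported $\mathbf K$-valued functions on $\hat{\mathcal E}_\pi$.
   Context: Under the hypotheses $A$ is commutative, and $\mathcal B_A=\{e\in A:e^2=e\}$ is a Boolean algebra (possibly without top) under $e\wedge f=ef$, $e\vee f=e+f-ef$, into which $\pi$ maps. A character of $\mathcal E$ is a nonzero map $\varphi:\mathcal E\to\{0,1\}$ with $\varphi(0)=0$ and $\varphi(xy)=\varphi(x)\varphi(y)$; the spectrum $\hat{\mathcal E}$ is the set of characters with the topology of pointwise convergence (induced from $\{0,1\}^{\mathcal E}$). A character $\varphi$ is $\pi$-tight if for all $n\ge1$ and $x,y_1,\dots,y_n\in\mathcal E$, $\pi(x)\le\bigvee_i\pi(y_i)$ in $\mathcal B_A$ implies $\varphi(x)\le\bigvee_i\varphi(y_i)$; $\hat{\mathcal E}_\pi\subseteq\hat{\mathcal E}$ is the (closed) subspace of $\pi$-tight characters. The spectrum $\hat A$ is the set of nonzero $\mathbf K$-algebra homomorphisms $A\to\mathbf K$ with the topology of pointwise convergence, $\mathbf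 K$ being discrete. *)

(* Defs.v *)
From HB Require Import structures.
From mathcomp Require Import all_boot all_order all_algebra.
From Stdlib Require List.
Set Implicit Arguments. Unset Strict Implicit. Unset Printing Implicit Defensive.
Import Order.TTheory GRing.Theory.
Local Open Scope ring_scope.

Definition topology (T : Type) := (T -> Prop) -> Prop.

(* Topology of pointwise convergence on X -> Y, Y discrete:
   U is open iff each f in U has a finite set of points s such that every g
   agreeing with f on s lies in U (basic open sets of the product topology). *)
Definition pointwise_top (X Y : Type) : topology (X -> Y) :=
  fun U => forall f, U f -> exists s : list X,
      forall g, (forall x, List.In x s -> g x = f x) -> U g.

Definition subspace_top (T : Type) (tau : topology T) (P : T -> Prop)
  : topology {t | P t} :=
  fun V => exists U, tau U /\ forall v : {t | P t}, V v <-> U (proj1_sig v).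

(* Homeomorphism: a bijection h such that U is open iff h^{-1}(U) is open
   (i.e. h is continuous and open). *)
Definition homeomorphic (T1 T2 : Type) (tau1 : topology T1) (tau2 : topology T2)
  : Prop :=
  exists h : T1 -> T2, bijective h /\
    forall U : T2 -> Prop, tau2 U <-> tau1 (fun t => U (h t)).

Definition compact (T : Type) (tau : topology T) (C : T -> Prop) : Prop :=
  forall (I : Type) (U : I -> T -> Prop),
    (forall i, tau (U i)) -> (forall x, C x -> exists i, U i x) ->
    exists s : list I, forall x, C x -> exists i, List.In i s /\ U i x.

Definition closure (T : Type) (tau : topology T) (S : T -> Prop) : T -> Prop :=
  fun x => forall U, tau U -> U x -> exists y, U y /\ S y.

Definition locally_constant (T Y : Type) (tau : topology T) (f : T -> Y) : Prop :=
  forall x, exists U, tau U /\ U x /\ forall y, U y -> f y = f x.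

Definition Cc (T : Type) (tau : topology T) (K : fieldType) (f : T -> K) : Prop :=
  locally_constant tau f /\ compact tau (closure tau (fun x => f x <> 0)).

(* A semilattice with zero: a meet-semilattice with bottom; xy := x `&` y,
   0 := \bot. *)

(* Characters E -> {0,1}, with {0,1} rendered as bool. *)
Definition is_character (d : Order.disp_t) (E : bMeetSemilatticeType d)
  (phi : E -> bool) : Prop :=
  (exists x, phi x) /\ phi \bot%O = false /\
  forall x y, phi (x `&` y)%O = phi x && phi y.

(* Order and finite joins in the Boolean algebra of idempotents of A:
   e <= f iff e f = e; e \/ f = e + f - e f. *)
Definition idem_le (A : zmodType) (mul : A -> A -> A) (e f : A) : Prop :=
  mul e f = e.

Fixpoint idem_join (A : zmodType) (mul : A -> A -> A) (l : seq A) : A :=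
  match l with
  | [::] => 0
  | e :: l' => e + idem_join mul l' - mul e (idem_join mul l')
  end.

Definition is_tight (d : Order.disp_t) (E : bMeetSemilatticeType d)
  (A : zmodType) (mul : A -> A -> A) (pi : E -> A) (phi : E -> bool) : Prop :=
  forall (x : E) (ys : seq E), ys <> [::] ->
    idem_le mul (pi x) (idem_join mul (map pi ys)) ->
    (phi x -> has phi ys).

Definition tight_character (d : Order.disp_t) (E : bMeetSemilatticeType d)
  (A : zmodType) (mul : A -> A -> A) (pi : E -> A) (phi : E -> bool) : Prop :=
  is_character phi /\ is_tight mul pi phi.

Definition is_algebra (K : fieldType) (A : lmodType K) (mul : A -> A -> A)
  : Prop :=
  (forall x y z, mul x (mul y z) = mul (mul x y) z) /\
  (forall x y z, mul (x + y) z = mul x z + mul y z) /\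
  (forall x y z, mul x (y + z) = mul x y + mul x z) /\
  (forall (a : K) x y, mul (a *: x) y = a *: mul x y) /\
  (forall (a : K) x y, mul x (a *: y) = a *: mul x y).

Definition generates (K : fieldType) (A : lmodType K) (mul : A -> A -> A)
  (G : A -> Prop) : Prop :=
  forall S : A -> Prop,
    S 0 -> (forall x y, S x -> S y -> S (x + y)) ->
    (forall (a : K) x, S x -> S (a *: x)) ->
    (forall x y, S x -> S y -> S (mul x y)) ->
    (forall x, G x -> S x) -> forall x, S x.

Definition is_alg_character (K : fieldType) (A : lmodType K)
  (mul : A -> A -> A) (chi : A -> K) : Prop :=
  (exists x, chi x <> 0) /\
  (forall x y, chi (x + y) = chi x + chi y) /\
  (forall (a : K) x, chi (a *: x) = a * chi x) /\
  (forall x y, chi (mul x y) = chi x * chi y).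

Definition alg_iso_Cc (K : fieldType) (A : lmodType K) (mul : A -> A -> A)
  (T : Type) (tau : topology T) : Prop :=
  exists Phi : A -> (T -> K),
    injective Phi /\
    (forall x, Cc tau (Phi x)) /\
    (forall f, Cc tau f -> exists x, Phi x = f) /\
    (forall x y t, Phi (x + y) t = Phi x t + Phi y t) /\
    (forall (a : K) x t, Phi (a *: x) t = a * Phi x t) /\
    (forall x y t, Phi (mul x y) t = Phi x t * Phi y t).

Arguments pointwise_top : clear implicits.
Arguments subspace_top {T} tau P.

(* Main.v *)
Require Import Defs.
From HB Require Import structures.
From mathcomp Require Import all_boot all_order all_algebra.
From Stdlib Require Import ClassicalEpsilon ProofIrrelevance FunctionalExtensionality Classical.
From mathcomp Require classical_sets.
Set Implicit Arguments. Unset Strict Implicit. Unset Printing Implicit Defensive.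
Import Order.TTheory GRing.Theory.
Local Open Scope ring_scope.

Section Main.
Variables (d : Order.disp_t) (E : bMeetSemilatticeType d)
  (K : fieldType) (A : lmodType K) (mul : A -> A -> A).
Hypothesis hA : is_algebra mul.
Variable pi : E -> A.
Hypothesis hpi0 : pi \bot%O = 0.
Hypothesis hpiM : forall x y : E, pi (x `&` y)%O = mul (pi x) (pi y).
Hypothesis hgen : generates mul (fun a => exists x : E, a = pi x).

Lemma mA x y z : mul x (mul y z) = mul (mul x y) z. Proof. by case: hA. Qed.
Lemma mDl x y z : mul (x + y) z = mul x z + mul y z. Proof. by case: hA => _ []. Qed.
Lemma mDr x y z : mul x (y + z) = mul x y + mul x z. Proof. by case: hA => _ [_ []]. Qed.
Lemma mZl (a : K) x y : mul (a *: x) y = a *: mul x y. Proof. by case: hA => _ [_ [_ []]]. Qed.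
Lemma mZr (a : K) x y : mul x (a *: y) = a *: mul x y. Proof. by case: hA => _ [_ [_ []]]. Qed.
Lemma m0l x : mul 0 x = 0.
Proof. by rewrite -(scale0r (0:A)) mZl !scale0r. Qed.
Lemma m0r x : mul x 0 = 0.
Proof. by rewrite -(scale0r (0:A)) mZr !scale0r. Qed.
Lemma mNl x y : mul (- x) y = - mul x y.
Proof. by rewrite -scaleN1r mZl scaleN1r. Qed.
Lemma mNr x y : mul x (- y) = - mul x y.
Proof. by rewrite -scaleN1r mZr scaleN1r. Qed.
Lemma mBl x y z : mul (x - y) z = mul x z - mul y z.
Proof. by rewrite mDl mNl. Qed.
Lemma mBr x y z : mul x (y - z) = mul x y - mul x z.
Proof. by rewrite mDr mNr. Qed.

Definition ev (r : seq (K * E)) : A := \sum_(p <- r) p.1 *: pi p.2.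
Lemma ev_nil : ev [::] = 0. Proof. by rewrite /ev big_nil. Qed.
Lemma ev_cons p r : ev (p :: r) = p.1 *: pi p.2 + ev r. Proof. by rewrite /ev big_cons. Qed.
Lemma ev_cat r1 r2 : ev (r1 ++ r2) = ev r1 + ev r2. Proof. by rewrite /ev big_cat. Qed.
Definition scl (k : K) (r : seq (K * E)) := map (fun p => (k * p.1, p.2)) r.
Lemma ev_scl k r : ev (scl k r) = k *: ev r.
Proof.
elim: r => [|p r IH]; first by rewrite /= ev_nil scaler0.
by rewrite /= !ev_cons IH scalerDr scalerA.
Qed.

Lemma mul_kpi_ev k x r :
  mul (k *: pi x) (ev r) = ev (map (fun q => (k * q.1, (x `&` q.2)%O)) r).
Proof.
elim: r => [|q r IH]; first by rewrite /= ev_nil m0r.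
by rewrite /= !ev_cons mDr IH mZr mZl hpiM scalerA mulrC.
Qed.

Fixpoint prd (r1 r2 : seq (K * E)) : seq (K * E) :=
  match r1 with
  | [::] => [::]
  | p :: r => map (fun q => (p.1 * q.1, (p.2 `&` q.2)%O)) r2 ++ prd r r2
  end.

Lemma ev_prd r1 r2 : mul (ev r1) (ev r2) = ev (prd r1 r2).
Proof.
elim: r1 => [|p r IH]; first by rewrite /= ev_nil m0l.
by rewrite /= ev_cons mDl IH ev_cat mul_kpi_ev.
Qed.

Lemma span a : exists r, a = ev r.
Proof.
move: a; apply: (hgen (S := fun a => exists r, a = ev r)).
- by exists [::]; rewrite ev_nil.
- by move=> _ _ [r1 ->] [r2 ->]; exists (r1 ++ r2); rewrite ev_cat.
- by move=> k _ [r ->]; exists (scl k r); rewrite ev_scl.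
- by move=> _ _ [r1 ->] [r2 ->]; exists (prd r1 r2); rewrite ev_prd.
- by move=> _ [x ->]; exists [:: (1, x)]; rewrite ev_cons ev_nil addr0 scale1r.
Qed.

Lemma mul_pi_comm x b : mul (pi x) b = mul b (pi x).
Proof.
have [r ->] := span b.
elim: r => [|q r IH]; first by rewrite ev_nil m0l m0r.
by rewrite ev_cons mDr mDl IH mZr mZl -!hpiM meetC.
Qed.

Lemma mC a b : mul a b = mul b a.
Proof.
have [r ->] := span a.
elim: r => [|q r IH]; first by rewrite ev_nil m0l m0r.
by rewrite ev_cons mDr mDl IH mZr mZl mul_pi_comm.
Qed.


Lemma boolRM (a b : bool) : ((a && b)%:R : K) = a%:R * b%:R.
Proof. by case: a; case: b; rewrite /= ?mulr1 ?mulr0. Qed.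
Lemma boolRU (a b : bool) : ((a || b)%:R : K) = a%:R + b%:R - a%:R * b%:R.
Proof. by case: a; case: b => /=; rewrite ?mul0r ?mulr0 ?mul1r ?subr0 ?add0r ?addr0 ?addrK. Qed.

Definition vl (phi : E -> bool) (r : seq (K * E)) : K := \sum_(p <- r) p.1 * (phi p.2)%:R.
Lemma vl_nil phi : vl phi [::] = 0. Proof. by rewrite /vl big_nil. Qed.
Lemma vl_cons phi p r : vl phi (p :: r) = p.1 * (phi p.2)%:R + vl phi r.
Proof. by rewrite /vl big_cons. Qed.
Lemma vl_cat phi r1 r2 : vl phi (r1 ++ r2) = vl phi r1 + vl phi r2.
Proof. by rewrite /vl big_cat. Qed.
Lemma vl_scl phi k r : vl phi (scl k r) = k * vl phi r.
Proof.
elim: r => [|p r IH]; first by rewrite /= vl_nil mulr0.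
by rewrite /= !vl_cons IH mulrDr mulrA.
Qed.
Lemma vl_prd (phi : E -> bool) r1 r2 :
  is_character phi -> vl phi (prd r1 r2) = vl phi r1 * vl phi r2.
Proof.
move=> [_ [_ hM]].
elim: r1 => [|p r IH]; first by rewrite /= vl_nil mul0r.
rewrite /= vl_cat IH vl_cons mulrDl; congr (_ + _); clear IH.
elim: r2 => [|q r2 IH2]; first by rewrite /= vl_nil mulr0.
rewrite /= !vl_cons IH2 mulrDr hM boolRM; congr (_ + _).
by rewrite -!mulrA; congr (_ * _); rewrite mulrCA.
Qed.
Lemma vl_nohas (phi : E -> bool) r : ~~ has (fun p => phi p.2) r -> vl phi r = 0.
Proof.
elim: r => [|p r IH]; first by rewrite vl_nil.
by rewrite /= negb_or vl_cons => /andP[/negbTE -> /IH ->]; rewrite mulr0 addr0.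
Qed.

Definition mfold (x0 : E) (l : seq E) : E := foldr (fun x acc => (x `&` acc)%O) x0 l.
Lemma phi_mfold (phi : E -> bool) x0 l : is_character phi -> phi (mfold x0 l) = phi x0 && all phi l.
Proof.
move=> [_ [_ hM]]; elim: l => [|x l IH] /=; first by rewrite andbT.
by rewrite hM IH andbCA.
Qed.
Lemma mfold_le x0 l x : x \in l -> (mfold x0 l <= x)%O.
Proof.
elim: l => [|y l IH] //=; rewrite inE => /orP[/eqP ->|/IH h]; first exact: leIl.
exact: leIxr.
Qed.

Definition rT (phi : E -> bool) (z : E) (r : seq (K * E)) :=
  [seq (p.1, (z `&` p.2)%O) | p <- r & ~~ phi p.2].

Lemma split_gen (phi : E -> bool) z r :
  (forall p, p \in r -> phi p.2 -> (z <= p.2)%O) ->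
  mul (pi z) (ev r) = vl phi r *: pi z + ev (rT phi z r).
Proof.
elim: r => [|q r IH] Hz; first by rewrite /rT /= ev_nil vl_nil m0r scale0r addr0.
have IH' : mul (pi z) (ev r) = vl phi r *: pi z + ev (rT phi z r).
  by apply: IH => p pr; apply: Hz; rewrite inE pr orbT.
rewrite ev_cons mDr IH' vl_cons mZr -hpiM /rT /=.
case hq: (phi q.2) => /=.
  rewrite (meet_l (Hz q (mem_head _ _) hq)) mulr1 scalerDl addrA //.
by rewrite ev_cons mulr0 add0r /= addrCA.
Qed.

Lemma rT_all (phi : E -> bool) z r : is_character phi -> all (fun p => ~~ phi p.2) (rT phi z r).
Proof.
move=> [h1 [h2 hM]]; rewrite /rT all_map; apply/allP => p.
by rewrite mem_filter /= hM => /andP[/negbTE -> _]; rewrite andbF.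
Qed.

Lemma split (phi : E -> bool) r : is_character phi -> has (fun p => phi p.2) r ->
  exists z, phi z /\ mul (pi z) (ev r) = vl phi r *: pi z + ev (rT phi z r).
Proof.
move=> hc /hasP[p0 p0r hp0].
pose z := mfold p0.2 [seq p.2 | p <- r & phi p.2].
exists z; split.
  rewrite /z phi_mfold // hp0 /=; apply/allP => x /mapP[p].
  by rewrite mem_filter => /andP[hp _] ->.
apply: split_gen => p pr hp; apply: mfold_le; apply/mapP; exists p => //.
by rewrite mem_filter hp.
Qed.

Lemma ij_le (l : seq A) X : (forall y, y \in l -> mul y X = y) ->
  mul (idem_join mul l) X = idem_join mul l.
Proof.
elim: l => [|e l IH] H /=; first by rewrite m0l.
have He : mul e X = e by apply: H; rewrite mem_head.
have IH' : mul (idem_join mul l) X = idem_join mul l.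
  by apply: IH => y yl; apply: H; rewrite inE yl orbT.
by rewrite mBl mDl He IH' -mA IH'.
Qed.

Lemma le_ij (l : seq A) y : (forall w, w \in l -> mul w w = w) -> y \in l ->
  mul y (idem_join mul l) = y.
Proof.
elim: l => [|e l IH] H //=.
rewrite inE => /orP[/eqP ->|yl].
  by rewrite mBr mDr mA (H e (mem_head _ _)) addrK.
have IH' : mul y (idem_join mul l) = y.
  by apply: IH => // w wl; apply: H; rewrite inE wl orbT.
rewrite mBr mDr IH' mA (mC y e) -mA IH' (mC e y).
by rewrite addrC addKr.
Qed.

Lemma ev_le r X : (forall p, p \in r -> mul (pi p.2) X = pi p.2) -> mul (ev r) X = ev r.
Proof.
elim: r => [|p r IH] H; first by rewrite ev_nil m0l.
rewrite ev_cons mDl mZl H ?mem_head // IH // => q qr; apply: H.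
by rewrite inE qr orbT.
Qed.

Lemma pi_idem x : mul (pi x) (pi x) = pi x.
Proof. by rewrite -hpiM meetxx. Qed.

Lemma ev_ij r : mul (ev r) (idem_join mul (map pi (map snd r))) = ev r.
Proof.
apply: ev_le => p pr; apply: le_ij.
  by move=> w /mapP[x _ ->]; rewrite pi_idem.
by apply: map_f; apply: map_f.
Qed.

Lemma ij_bot l : idem_join mul (pi \bot%O :: l) = idem_join mul l.
Proof. by rewrite /= hpi0 m0l add0r subr0. Qed.

Lemma chi_join (chi : A -> K) (b : E -> bool)
  (Hadd : forall x y, chi (x + y) = chi x + chi y)
  (Hmul : forall x y, chi (mul x y) = chi x * chi y)
  (Hb : forall x, chi (pi x) = (b x)%:R) ys :
  chi (idem_join mul (map pi ys)) = (has b ys)%:R.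
Proof.
have chi0 : chi 0 = 0.
  have h := Hadd 0 0; rewrite addr0 in h.
  by apply: (@addrI _ (chi 0)); rewrite -h addr0.
have chiN x : chi (- x) = - chi x.
  by apply/eqP; rewrite -addr_eq0 -Hadd addNr chi0.
elim: ys => [|y ys IH] /=; first by rewrite chi0.
by rewrite Hadd chiN Hadd Hmul IH Hb boolRU.
Qed.

Lemma WD (phi : E -> bool) r : tight_character mul pi phi -> ev r = 0 -> vl phi r = 0.
Proof.
move=> [hc ht] h0.
case hh: (has (fun p => phi p.2) r); last by rewrite vl_nohas ?hh.
have [z [hz hsp]] := split hc hh.
apply/eqP; apply/negP => /negP hk.
move: hsp; rewrite h0 m0r => /esym /eqP; rewrite addr_eq0 => /eqP hz'.
have hpz : pi z = - (vl phi r)^-1 *: ev (rT phi z r).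
  by rewrite scaleNr -scalerN -hz' scalerA mulVf // scale1r.
have := ht z (\bot%O :: map snd (rT phi z r)) ltac:(by []).
rewrite /idem_le /= hpi0 m0l add0r subr0.
have -> : mul (pi z) (idem_join mul (map pi (map snd (rT phi z r)))) = pi z.
  by rewrite {1}hpz mZl ev_ij -hpz.
move=> /(_ erefl hz); have [_ [-> _]] := hc; rewrite /=.
move: (@rT_all phi z r hc) => /allP hall /hasP[x /mapP[p pr ->]].
by move: (hall p pr) => /negbTE ->.
Qed.


Definition chiv (phi : E -> bool) (a : A) : K :=
  epsilon (inhabits 0) (fun k => exists r, a = ev r /\ k = vl phi r).

Section Tight.
Variable phi : E -> bool.
Hypothesis ht : tight_character mul pi phi.

Lemma chiv_ev r : chiv phi (ev r) = vl phi r.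
Proof.
have [r' [e1 ->]] : exists r', ev r = ev r' /\ chiv phi (ev r) = vl phi r'.
  rewrite /chiv.
  have := epsilon_spec (inhabits 0) (fun k => exists r0, ev r = ev r0 /\ k = vl phi r0).
  case; first by exists (vl phi r), r.
  by move=> r0 [h1 h2]; exists r0.
have := @WD phi (r ++ scl (-1) r') ht.
rewrite ev_cat ev_scl vl_cat vl_scl e1 scaleN1r subrr => /(_ erefl).
by rewrite mulN1r => /subr0_eq ->.
Qed.

Lemma ev1 x : pi x = ev [:: (1, x)].
Proof. by rewrite ev_cons ev_nil addr0 scale1r. Qed.

Lemma chiv_pi x : chiv phi (pi x) = (phi x)%:R.
Proof. by rewrite ev1 chiv_ev vl_cons vl_nil addr0 mul1r. Qed.

Lemma chivD a b : chiv phi (a + b) = chiv phi a + chiv phi b.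
Proof.
have [r1 ->] := span a; have [r2 ->] := span b.
by rewrite -ev_cat !chiv_ev vl_cat.
Qed.

Lemma chivZ k a : chiv phi (k *: a) = k * chiv phi a.
Proof. by have [r1 ->] := span a; rewrite -ev_scl !chiv_ev vl_scl. Qed.

Lemma chivM a b : chiv phi (mul a b) = chiv phi a * chiv phi b.
Proof.
have [r1 ->] := span a; have [r2 ->] := span b.
by rewrite ev_prd !chiv_ev vl_prd //; case: ht.
Qed.

Lemma chiv0 : chiv phi 0 = 0.
Proof. by rewrite -(scale0r (0:A)) chivZ mul0r. Qed.

Lemma chivN a : chiv phi (- a) = - chiv phi a.
Proof. by rewrite -scaleN1r chivZ mulN1r. Qed.

Lemma chivB a b : chiv phi (a - b) = chiv phi a - chiv phi b.
Proof. by rewrite chivD chivN. Qed.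

Lemma chiv_join ys : chiv phi (idem_join mul (map pi ys)) = (has phi ys)%:R.
Proof. by apply: chi_join; [exact: chivD | exact: chivM | exact: chiv_pi]. Qed.

Lemma chiv_alg : is_alg_character mul (chiv phi).
Proof.
split; last split; [|exact: chivD|split; [exact: chivZ|exact: chivM]].
case: ht => [[[x hx] _] _]; exists (pi x); rewrite chiv_pi hx /=.
by move/eqP; rewrite oner_eq0.
Qed.

End Tight.

Lemma idemK (c : K) : c * c = c -> c = (c == 1)%:R.
Proof.
case: (c =P 1) => [->|h] //= hc.
have : c * (c - 1) = 0 by rewrite mulrBr mulr1 hc subrr.
move/eqP; rewrite mulf_eq0 => /orP[/eqP //|]; rewrite subr_eq0 => /eqP //.
Qed.

Lemma boolR_eq1 (a b : bool) : ((a%:R * b%:R : K) == 1) = a && b.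
Proof.
by case: a; case: b => /=; rewrite ?mul0r ?mulr0 ?mul1r ?eqxx // eq_sym oner_eq0.
Qed.

Lemma boolR_eq1' (a : bool) : (((a%:R : K)) == 1) = a.
Proof. by case: a => /=; rewrite ?eqxx // eq_sym oner_eq0. Qed.

Definition tcOf (chi : A -> K) : E -> bool := fun x => chi (pi x) == 1.

Section Alg.
Variable chi : A -> K.
Hypothesis hc : is_alg_character mul chi.

Lemma chi_add x y : chi (x + y) = chi x + chi y. Proof. by case: hc => _ []. Qed.
Lemma chi_scl k x : chi (k *: x) = k * chi x. Proof. by case: hc => _ [_ []]. Qed.
Lemma chi_mul x y : chi (mul x y) = chi x * chi y. Proof. by case: hc => _ [_ []]. Qed.
Lemma chi0 : chi 0 = 0.
Proof. by rewrite -(scale0r (0:A)) chi_scl mul0r. Qed.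

Lemma chi_pi01 x : chi (pi x) = (tcOf chi x)%:R.
Proof. by apply: idemK; rewrite -chi_mul pi_idem. Qed.

Lemma chi_ev r : chi (ev r) = vl (tcOf chi) r.
Proof.
elim: r => [|p r IH]; first by rewrite ev_nil vl_nil chi0.
by rewrite ev_cons vl_cons chi_add chi_scl IH chi_pi01.
Qed.

Lemma tc_tight : tight_character mul pi (tcOf chi).
Proof.
split; [split; [|split]|].
- case: hc => [[a ha] _]; have [r er] := span a.
  move: ha; rewrite er chi_ev.
  case hh: (has (fun p => tcOf chi p.2) r); last by rewrite vl_nohas ?hh.
  by move: hh => /hasP[p _ hp] _; exists p.2.
- by rewrite /tcOf hpi0 chi0 eq_sym oner_eq0.
- move=> x y; rewrite {1}/tcOf hpiM chi_mul [chi (pi x)]chi_pi01 [chi (pi y)]chi_pi01.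
  exact: boolR_eq1.
- move=> x ys _; rewrite /idem_le => hle hx.
  have := congr1 chi hle; rewrite chi_mul.
  rewrite (@chi_join chi (tcOf chi) chi_add chi_mul chi_pi01) [chi (pi x)]chi_pi01 hx.
  by case: (has _ _) => //=; rewrite ?mulr0 => /eqP; rewrite eq_sym oner_eq0.
Qed.

End Alg.


Definition isIdeal (I : A -> Prop) :=
  I 0 /\ (forall x y, I x -> I y -> I (x + y)) /\ (forall (k : K) x, I x -> I (k *: x)) /\
  (forall a x, I x -> I (mul a x)).

Lemma isIdeal_ext (J1 J2 : A -> Prop) : (forall x, J1 x <-> J2 x) -> isIdeal J1 -> isIdeal J2.
Proof.
move=> H [h0 [hD [hZ hM]]]; split; first by apply/H.
split; first by move=> x y /H hx /H hy; apply/H; apply: hD.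
split; first by move=> k x /H hx; apply/H; apply: hZ.
by move=> a x /H hx; apply/H; apply: hM.
Qed.

Lemma maxideal (I : A -> Prop) (e : A) : isIdeal I -> ~ I e ->
  exists M : A -> Prop, isIdeal M /\ ~ M e /\ (forall x, I x -> M x) /\
    (forall B, isIdeal B -> ~ B e -> (forall x, M x -> B x) -> forall x, B x -> M x).
Proof.
move=> hI hIe.
pose P (J : A -> Prop) := isIdeal (fun x => J x \/ I x) /\ ~ (J e \/ I e).
have := @classical_sets.Zorn_bigcup A P.
case.
- move=> F FP Ftot; rewrite /P /classical_sets.bigcup /classical_sets.mkset.
  have lift X x : F X -> X x \/ I x -> (exists2 i, F i & i x) \/ I x.
    by move=> FX [h|h]; [left; exists X|right].
  case: hI => [I0 [ID [IZ IM]]].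
  split; last first.
    by move=> [[X FX Xe]|//]; have [_ h] := FP X FX; apply: h; left.
  split; first by right.
  split.
    move=> x y [[X FX Xx]|Ix] [[Y FY Yy]|Iy].
    + have [XY|YX] := Ftot X Y FX FY.
      * apply: (lift Y) => //; have [[_ [h _]] _] := FP Y FY.
        by apply: h; left => //; apply: XY.
      * apply: (lift X) => //; have [[_ [h _]] _] := FP X FX.
        by apply: h; left => //; apply: YX.
    + by apply: (lift X) => //; have [[_ [h _]] _] := FP X FX; apply: h; [left|right].
    + by apply: (lift Y) => //; have [[_ [h _]] _] := FP Y FY; apply: h; [right|left].
    + by right; apply: ID.
  split.
    move=> k x [[X FX Xx]|Ix]; last by right; apply: IZ.
    by apply: (lift X) => //; have [[_ [_ [h _]]] _] := FP X FX; apply: h; left.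
  move=> a x [[X FX Xx]|Ix]; last by right; apply: IM.
  by apply: (lift X) => //; have [[_ [_ [_ h]]] _] := FP X FX; apply: h; left.
- move=> M [[hM hMe] hmax].
  exists (fun x => M x \/ I x); split => //; split => //; split; first by right.
  move=> B hB hBe hMB x Bx; apply: NNPP => hnx.
  apply: (hmax B).
    split; first by move=> t Mt; apply: hMB; left.
    by move=> sub; apply: hnx; left; apply: sub.
  split.
    apply: isIdeal_ext hB => t; split; first by left.
    by case=> // It; apply: hMB; right.
  by case=> // Ie; apply: hIe.
Qed.

Definition pb (P : Prop) : bool := if excluded_middle_informative P then true else false.
Lemma pbP (P : Prop) : pb P = true <-> P.
Proof. by rewrite /pb; case: excluded_middle_informative. Qed.
Lemma pbF (P : Prop) : pb P = false <-> ~ P.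
Proof. by rewrite /pb; case: excluded_middle_informative. Qed.

Section Prime.
Variable M : A -> Prop.
Hypothesis hM : isIdeal M.
Lemma M0 : M 0. Proof. by case: hM. Qed.
Lemma MD x y : M x -> M y -> M (x + y). Proof. by case: hM => _ [h _]; apply: h. Qed.
Lemma MZ k x : M x -> M (k *: x). Proof. by case: hM => _ [_ [h _]]; apply: h. Qed.
Lemma MM a x : M x -> M (mul a x). Proof. by case: hM => _ [_ [_ h]]; apply: h. Qed.
Lemma MMr a x : M x -> M (mul x a). Proof. by rewrite mC; apply: MM. Qed.
Lemma MN x : M x -> M (- x). Proof. by move=> h; rewrite -scaleN1r; apply: MZ. Qed.
Lemma MB x y : M x -> M y -> M (x - y). Proof. by move=> h1 h2; apply: MD => //; apply: MN. Qed.
Lemma Mev r : (forall p, p \in r -> M (pi p.2)) -> M (ev r).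
Proof.
elim: r => [|p r IH] H; first by rewrite ev_nil; apply: M0.
rewrite ev_cons; apply: MD; first by apply: MZ; apply: H; rewrite mem_head.
by apply: IH => q qr; apply: H; rewrite inE qr orbT.
Qed.
Lemma Mjoin ys : (forall y, y \in ys -> M (pi y)) -> M (idem_join mul (map pi ys)).
Proof.
elim: ys => [|y ys IH] H /=; first exact: M0.
have hy : M (pi y) by apply: H; rewrite mem_head.
have IH' : M (idem_join mul (map pi ys)) by apply: IH => w wy; apply: H; rewrite inE wy orbT.
by apply: MB; [apply: MD|apply: MMr].
Qed.
End Prime.

Lemma prime_char (I : A -> Prop) (e : A) : isIdeal I -> ~ I e -> mul e e = e ->
  exists phi, tight_character mul pi phi /\ (forall b, I b -> chiv phi b = 0) /\
    chiv phi e = 1.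
Proof.
move=> hI hIe hee.
have [M [hM [hMe [hIM hmax]]]] := maxideal hI hIe.
(* e is in the ideal generated by M and any b outside M *)
have gen b : ~ M b -> exists i a k, M i /\ e = i + mul a b + k *: b.
  move=> hb; apply: NNPP => hne.
  pose G x := exists i a k, M i /\ x = i + mul a b + k *: b.
  have hG : isIdeal G.
    split; first by exists 0, 0, 0; split; [apply: (M0 hM)|rewrite m0l scale0r !addr0].
    split.
      move=> _ _ [i1 [a1 [k1 [h1 ->]]]] [i2 [a2 [k2 [h2 ->]]]].
      exists (i1 + i2), (a1 + a2), (k1 + k2); split; first by apply: (MD hM).
      by rewrite mDl scalerDl addrACA (addrACA i1).
    split.
      move=> k _ [i [a [k1 [h1 ->]]]]; exists (k *: i), (k *: a), (k * k1).
      by split; [apply: (MZ hM)|rewrite !scalerDr mZl scalerA].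
    move=> r _ [i [a [k1 [h1 ->]]]]; exists (mul r i), (mul r a + k1 *: r), 0.
    split; first by apply: (MM hM).
    by rewrite scale0r addr0 !mDr mDl mZr mZl mA addrA.
  have := hmax G hG.
  have hGe : ~ G e by move=> h; apply: hne.
  move=> /(_ hGe) H; apply: hb; apply: (H _ b).
    by move=> x Mx; exists x, 0, 0; rewrite m0l scale0r !addr0.
  by exists 0, 0, 1; split; [apply: (M0 hM)|rewrite m0l scale1r !add0r].
have prime b c : M (mul b c) -> M b \/ M c.
  move=> hbc; apply: NNPP => /not_or_and [nb nc].
  have [i1 [a1 [k1 [h1 e1]]]] := gen b nb.
  have [i2 [a2 [k2 [h2 e2]]]] := gen c nc.
  apply: hMe; rewrite -hee.
  have hy1c : M (mul (mul a1 b + k1 *: b) c).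
    by rewrite mDl mZl -mA; apply: (MD hM) => //; [apply: (MM hM)|apply: (MZ hM)].
  rewrite {1}e1 e2 -addrA mDl; apply: (MD hM); first by apply: (MMr hM).
  rewrite !mDr mZr; apply: (MD hM); [apply: (MD hM)|by apply: (MZ hM)].
    by apply: (MM hM).
  by rewrite (mC _ c) mA mC; apply: (MM hM).
pose phi := fun x => ~~ pb (M (pi x)).
have phiP x : phi x = true <-> ~ M (pi x).
  by rewrite /phi; case h: (pb _); [move/pbP: h|move/pbF: h].
have phiF x : phi x = false <-> M (pi x).
  by rewrite /phi; case h: (pb _); [move/pbP: h|move/pbF: h].
have nallM : exists x, phi x.
  apply: NNPP => hn; apply: hMe; have [r ->] := span e.
  apply: (Mev hM) => // p _; apply/phiF; case h: (phi p.2) => //.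
  by exfalso; apply: hn; exists p.2.
have hc : is_character phi.
  split => //; split.
    by apply/phiF; rewrite hpi0; apply: (M0 hM).
  move=> x y; case hx: (phi x); case hy: (phi y) => /=.
  - apply/phiP; rewrite hpiM => /prime [].
      by apply/phiP.
    by apply/phiP.
  - by apply/phiF; rewrite hpiM; apply: (MM hM); apply/phiF.
  - by apply/phiF; rewrite hpiM; apply: (MMr hM); apply/phiF.
  - by apply/phiF; rewrite hpiM; apply: (MM hM); apply/phiF.
have ht : tight_character mul pi phi.
  split => // x ys _; rewrite /idem_le => hle /phiP hx.
  apply: NNPP => hn; apply: hx; rewrite -hle; apply: (MM hM) => //.
  apply: (Mjoin hM) => // y yin; apply/phiF; case h: (phi y) => //.
  by exfalso; apply: hn; apply/hasP; exists y.
have Mrel r : has (fun p => phi p.2) r -> exists z, phi z /\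
    M (mul (pi z) (ev r) - vl phi r *: pi z).
  move=> hh; have [z [hz hs]] := split hc hh; exists z; split => //.
  rewrite hs addrC addKr; apply: (Mev hM) => // p pr; apply/phiF.
  by move/allP: (@rT_all phi z r hc) => /(_ p pr) /negbTE.
exists phi; split => //; split.
  move=> b /hIM; have [r ->] := span b => hb; rewrite chiv_ev //.
  case hh: (has (fun p => phi p.2) r); last by rewrite vl_nohas ?hh.
  have [z [/phiP hz hrel]] := Mrel r hh.
  apply: NNPP => hk; apply: hz.
  have h1 : M (vl phi r *: pi z).
    have -> : vl phi r *: pi z = mul (pi z) (ev r) - (mul (pi z) (ev r) - vl phi r *: pi z).
      by rewrite opprB addrC addrNK.
    by apply: (MB hM) => //; apply: (MM hM).
  have hk' : vl phi r != 0 by apply/eqP.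
  by have := MZ hM (vl phi r)^-1 h1; rewrite scalerA mulVf // scale1r.
have [r er] := span e.
have hh : has (fun p => phi p.2) r.
  apply: NNPP => hh; apply: hMe; rewrite er; apply: (Mev hM) => // p pr.
  by apply/phiF; case h: (phi p.2) => //; exfalso; apply: hh; apply/hasP; exists p.
have [z [/phiP hz hrel]] := Mrel r hh.
have hk : vl phi r != 0.
  apply/negP => /eqP hk; move: hrel; rewrite hk scale0r subr0 -er => /prime [] //.
have := chivM ht e e; rewrite hee => /esym /idemK.
rewrite er chiv_ev // => H; apply/eqP; apply: contraT => hn.
by move: H hk; rewrite (negbTE hn) /= => ->; rewrite eqxx.
Qed.


Lemma u_idem (l : seq E) :
  mul (idem_join mul (map pi l)) (idem_join mul (map pi l)) = idem_join mul (map pi l).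
Proof.
apply: ij_le => y yl; apply: le_ij => // w /mapP[x _ ->]; exact: pi_idem.
Qed.

Lemma sep a : (forall phi, tight_character mul pi phi -> chiv phi a = 0) -> a = 0.
Proof.
move=> H; have [r er] := span a; apply: NNPP => ha.
pose u := idem_join mul (map pi (map snd r)).
pose Ann := fun b => mul b a = 0.
have hAnn : isIdeal Ann.
  rewrite /Ann; split; first exact: m0l.
  split; first by move=> x y hx hy; rewrite mDl hx hy addr0.
  split; first by move=> k x hx; rewrite mZl hx scaler0.
  by move=> c x hx; rewrite -mA hx m0r.
have hu : ~ Ann u by rewrite /Ann /u mC er ev_ij -er.
have [phi [ht [hvan hu1]]] := prime_char hAnn hu (u_idem _).
have hh : has (fun p => phi p.2) r.
  apply: NNPP => hn; move: hu1; rewrite /u chiv_join // has_map.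
  have -> : has (preim snd phi) r = false by apply/negbTE/negP.
  by move=> /eqP; rewrite /= eq_sym oner_eq0.
have [z [hz hs]] := split (proj1 ht) hh.
move: hs; rewrite -(chiv_ev ht) -er (H phi ht) scale0r add0r er => hs.
pose J := idem_join mul (map pi (map snd (rT phi z r))).
have hf : Ann (pi z - mul (pi z) J).
  rewrite /Ann mBl (mC (pi z) J) -mA er hs mC ev_ij; exact: subrr.
have := hvan _ hf; rewrite chivB // chivM // chiv_pi // hz /J chiv_join //.
have -> : has phi (map snd (rT phi z r)) = false.
  apply/negbTE; rewrite has_map; apply/hasPn => p pr.
  by move/allP: (@rT_all phi z r (proj1 ht)) => /(_ p pr).
by rewrite /= mulr0 subr0 => /eqP; rewrite oner_eq0.
Qed.


Lemma sig_eq (T : Type) (P : T -> Prop) (a b : {x | P x}) :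
  proj1_sig a = proj1_sig b -> a = b.
Proof.
case: a => x hx; case: b => y hy /= exy; subst y; f_equal; apply: proof_irrelevance.
Qed.

Lemma In_mem (T : eqType) (x : T) (s : seq T) : List.In x s <-> x \in s.
Proof.
elim: s => [|y s IH] //=; rewrite inE; split.
  by case=> [->|/IH ->]; [rewrite eqxx|rewrite orbT].
by case/orP=> [/eqP ->|/IH]; [left|right].
Qed.

Definition TE := {phi : E -> bool | tight_character mul pi phi}.
Definition TA := {chi : A -> K | is_alg_character mul chi}.
Definition tauE := subspace_top (pointwise_top E bool) (tight_character mul pi).
Definition tauA := subspace_top (pointwise_top A K) (is_alg_character mul).

Definition hmap (c : TA) : TE := exist _ (tcOf (proj1_sig c)) (tc_tight (proj2_sig c)).
Definition gmap (t : TE) : TA := exist _ (chiv (proj1_sig t)) (chiv_alg (proj2_sig t)).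

Lemma hgK : cancel hmap gmap.
Proof.
move=> c; apply: sig_eq => /=; apply: functional_extensionality => a.
have [r ->] := span a; rewrite chiv_ev; last exact: tc_tight (proj2_sig c).
by rewrite chi_ev //; exact: proj2_sig c.
Qed.

Lemma ghK : cancel gmap hmap.
Proof.
move=> t; apply: sig_eq => /=; apply: functional_extensionality => x.
by rewrite /tcOf chiv_pi ?boolR_eq1' //; exact: proj2_sig t.
Qed.

Lemma vl_agree (phi psi : E -> bool) r :
  (forall x, x \in map snd r -> phi x = psi x) -> vl phi r = vl psi r.
Proof.
elim: r => [|p r IH] H; first by rewrite !vl_nil.
rewrite !vl_cons (H p.2) /= ?inE ?eqxx //; congr (_ + _).
by apply: IH => x xr; apply: H; rewrite /= inE xr orbT.
Qed.

Lemma agreeL (s : seq A) : exists L : seq E, forall phi psi,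
  tight_character mul pi phi -> tight_character mul pi psi ->
  (forall x, x \in L -> phi x = psi x) -> forall a, List.In a s -> chiv phi a = chiv psi a.
Proof.
elim: s => [|a s [L IH]]; first by exists [::].
have [r er] := span a.
exists (map snd r ++ L) => phi psi hphi hpsi H b [<-|bs].
  by rewrite er !chiv_ev //; apply: vl_agree => x xr; apply: H; rewrite mem_cat xr.
apply: (IH phi psi hphi hpsi) => // x xL; apply: H; rewrite mem_cat xL orbT //.
Qed.

Lemma homeo_part : homeomorphic tauA tauE.
Proof.
exists hmap; split; first by exists gmap; [exact: hgK|exact: ghK].
move=> U; split.
- move=> [U' [hU' hUU']].
  exists (fun f : A -> K => U' (fun x => f (pi x) == 1)); split.
    move=> f hf; have [s hs] := hU' _ hf.
    exists (map pi s) => f' hf'; apply: hs => x xs /=.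
    by rewrite hf' //; apply: List.in_map.
  by move=> c; exact: hUU' (hmap c).
- move=> [W [hW hWV]].
  exists (fun p : E -> bool => exists t : TE, U t /\ exists L : seq E,
    (forall t' : TE, (forall x, x \in L -> proj1_sig t' x = proj1_sig t x) -> U t') /\
    (forall x, x \in L -> p x = proj1_sig t x)); split.
    move=> p [t [Ut [L [hL hp]]]]; exists L => q hq; exists t; split => //.
    exists L; split => // x xL; rewrite hq ?hp //; exact/In_mem.
  move=> t; split.
    move=> Ut.
    have : W (proj1_sig (gmap t)) by apply/hWV; rewrite ghK.
    move/hW => [s hs].
    have [L hL] := agreeL s.
    exists t; split => //; exists L; split => // t' ht'.
    have : W (proj1_sig (gmap t')).
      apply: hs => a ha /=; apply: hL => //; [exact: proj2_sig t'|exact: proj2_sig t].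
    by move/hWV; rewrite ghK.
  by move=> [t0 [Ut0 [L [hL hp]]]]; apply: hL => x xL; exact: hp.
Qed.


Lemma openAgree (t : TE) (L : seq E) :
  tauE (fun t' : TE => forall x, x \in L -> proj1_sig t' x = proj1_sig t x).
Proof.
exists (fun p : E -> bool => forall x, x \in L -> p x = proj1_sig t x); split => //.
move=> p hp; exists L => q hq x xL; rewrite hq ?hp //; exact/In_mem.
Qed.

Definition bel (phi0 : E -> bool) (x0 : E) (L : seq E) : A :=
  pi (mfold x0 (filter phi0 L)) -
  mul (pi (mfold x0 (filter phi0 L))) (idem_join mul (map pi (filter (predC phi0) L))).

Lemma all_filter_has (phi p : E -> bool) L :
  all phi (filter p L) && ~~ has phi (filter (predC p) L) = all (fun x => phi x == p x) L.
Proof.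
elim: L => [|x L IH] //=.
by case hp: (p x); case hx: (phi x) => /=; rewrite ?hx ?hp //= ?andbF.
Qed.

Lemma chiv_bel (phi : E -> bool) phi0 x0 L : tight_character mul pi phi ->
  chiv phi (bel phi0 x0 L) = (phi x0 && all (fun x => phi x == phi0 x) L)%:R.
Proof.
move=> ht; rewrite /bel chivB // chivM // chiv_pi // chiv_join // phi_mfold; last by case: ht.
rewrite -all_filter_has andbA.
by case: (_ && _); case: (has _ _) => /=; rewrite ?mulr1 ?mulr0 ?subrr ?subr0.
Qed.

Lemma compact_closure (T : Type) (tau : topology T) (C S : T -> Prop) :
  compact tau C -> (forall t, Defs.closure tau S t -> C t) -> compact tau (Defs.closure tau S).
Proof.
move=> hC hsub I U hUo hcov.
pose J := (I + {V : T -> Prop | tau V /\ forall y, V y -> ~ S y})%type.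
pose U' (j : J) := match j with inl i => U i | inr V => proj1_sig V end.
have [s hs] : exists s : seq J, forall x, C x -> exists j, List.In j s /\ U' j x.
  apply: hC; first by case=> [i|[V [hV _]]] /=; [apply: hUo|].
  move=> x Cx; case: (classic (Defs.closure tau S x)) => hx.
    by have [i hi] := hcov x hx; exists (inl i).
  have [V [hV [Vx hVS]]] : exists V, tau V /\ V x /\ forall y, V y -> ~ S y.
    apply: NNPP => hn; apply: hx => V hV Vx; apply: NNPP => hn2; apply: hn.
    by exists V; split => //; split => // y Vy Sy; apply: hn2; exists y.
  by exists (inr (exist _ V (conj hV hVS))).
exists (pmap (fun j : J => match j with inl i => Some i | inr _ => None end) s).
move=> x hx; have [j [js hj]] := hs x (hsub x hx).
  case: j js hj => [i|[V [hV hVS]]] js hj /=.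
    exists i; split => //; elim: s js {hs} => [|j s IH] //= [->|js] /=.
      by left.
    by case: j => [i'|V] /=; [right|]; apply: IH.
  by exfalso; have [y [Vy Sy]] := hx V hV hj; apply: (hVS y).
Qed.

Lemma compact_D (u : A) : mul u u = u ->
  compact tauE (fun t : TE => chiv (proj1_sig t) u <> 0).
Proof.
move=> hu I U hUo hcov.
pose Id := fun b => exists s : seq I, forall t : TE, chiv (proj1_sig t) b <> 0 ->
  exists i, List.In i s /\ U i t.
suff : Id u by [].
apply: NNPP => hn.
have hId : isIdeal Id.
  split.
    by exists [::] => t; rewrite chiv0 //; exact: proj2_sig t.
  split.
    move=> x y [s1 h1] [s2 h2]; exists (s1 ++ s2) => t.
    rewrite chivD; last exact: proj2_sig t.
    case: (classic (chiv (proj1_sig t) x = 0)) => hx.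
      rewrite hx add0r => /h2 [i [hi Ui]]; exists i; split => //.
      by apply: List.in_or_app; right.
    move=> _; have [i [hi Ui]] := h1 t hx; exists i; split => //.
    by apply: List.in_or_app; left.
  split.
    move=> k x [s h]; exists s => t; rewrite chivZ; last exact: proj2_sig t.
    by move=> hk; apply: h => hx; apply: hk; rewrite hx mulr0.
  move=> a x [s h]; exists s => t; rewrite chivM; last exact: proj2_sig t.
  by move=> hk; apply: h => hx; apply: hk; rewrite hx mulr0.
have [phi [ht [hvan hu1]]] := prime_char hId hn hu.
pose t0 : TE := exist _ phi ht.
have [i Ui] : exists i, U i t0 by apply: hcov; rewrite /= hu1; by move/eqP; rewrite oner_eq0.
have [W [hW hWU]] := hUo i.
have [L hL] := hW _ (proj1 (hWU t0) Ui).
have [x0 hx0] : exists x0, phi x0 by case: (ht) => [[]].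
have hb : Id (bel phi x0 L).
  exists [:: i] => t; rewrite chiv_bel; last exact: proj2_sig t.
  case hh: (_ && _) => //= _; exists i; split; first by left.
  apply/hWU; apply: hL => x /In_mem xL.
  by move/andP: hh => [_ /allP /(_ x xL) /eqP].
have := hvan _ hb; rewrite chiv_bel // hx0 /=.
have -> : all (fun x => phi x == phi x) L by apply/allP => x _; rewrite eqxx.
by move=> /eqP; rewrite oner_eq0.
Qed.

Definition Phi (a : A) : TE -> K := fun t => chiv (proj1_sig t) a.

Lemma Cc_Phi a : Cc tauE (Phi a).
Proof.
have [r er] := span a.
split.
  move=> t; exists (fun t' : TE => forall x, x \in map snd r -> proj1_sig t' x = proj1_sig t x).
  split; first exact: openAgree.
  split => // y hy; rewrite /Phi er !chiv_ev; [|exact: proj2_sig t|exact: proj2_sig y].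
  exact: vl_agree.
pose u := idem_join mul (map pi (map snd r)).
apply: (@compact_closure _ _ (fun t : TE => chiv (proj1_sig t) u <> 0)).
  exact: compact_D (u_idem _).
move=> t hcl hu; have ht := proj2_sig t.
have [y [hy hya]] := hcl _ (openAgree t (map snd r)) (fun x _ => erefl).
apply: hya; rewrite /Phi er !chiv_ev //; last exact: proj2_sig y.
rewrite (@vl_agree _ (proj1_sig t)) //.
apply: vl_nohas; move: hu; rewrite /u chiv_join // has_map.
by case: (has (preim snd (sval t)) r) => //= /eqP; rewrite oner_eq0.
Qed.


Definition Fc (l : seq (K * A)) : A :=
  foldr (fun cb acc => cb.1 *: cb.2 + (acc - mul cb.2 acc)) 0 l.

Lemma surj_Phi f : Cc tauE f -> exists a, Phi a = f.
Proof.
move=> [hlc hcomp].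
pose Idx := {p : TE * seq E * E | proj1_sig p.1.1 p.2 /\ p.2 \in p.1.2 /\
  forall t' : TE, (forall x, x \in p.1.2 -> proj1_sig t' x = proj1_sig p.1.1 x) ->
    f t' = f p.1.1}.
pose Uc (p : Idx) := fun t' : TE =>
  forall x, x \in (proj1_sig p).1.2 -> proj1_sig t' x = proj1_sig (proj1_sig p).1.1 x.
have [s hs] : exists s : seq Idx, forall t, Defs.closure tauE (fun x => f x <> 0) t ->
    exists p, List.In p s /\ Uc p t.
  apply: hcomp; first by move=> p; exact: openAgree.
  move=> t _.
  have [V [hV [Vt hVc]]] := hlc t.
  have [W [hW hWV]] := hV.
  have [L0 hL0] := hW _ (proj1 (hWV t) Vt).
  have [x0 hx0] : exists x0, proj1_sig t x0 by case: (proj2_sig t) => [[]].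
  have hp : proj1_sig (t, x0 :: L0, x0).1.1 (t, x0 :: L0, x0).2 /\
    (t, x0 :: L0, x0).2 \in (t, x0 :: L0, x0).1.2 /\
    forall t' : TE, (forall x, x \in (t, x0 :: L0, x0).1.2 ->
      proj1_sig t' x = proj1_sig (t, x0 :: L0, x0).1.1 x) -> f t' = f (t, x0 :: L0, x0).1.1.
    split => //; split; first by rewrite mem_head.
    move=> t' ht' /=; apply: hVc; apply/hWV; apply: hL0 => x /In_mem xL.
    by apply: ht'; rewrite inE xL orbT.
  by exists (exist _ (t, x0 :: L0, x0) hp).
pose bl (p : Idx) := bel (proj1_sig (proj1_sig p).1.1) (proj1_sig p).2 (proj1_sig p).1.2.
have hbl p (t' : TE) : chiv (proj1_sig t') (bl p) = (pb (Uc p t'))%:R.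
  case: p => [[[tp L] x0] [hx0 [x0L hc]]].
  rewrite /bl chiv_bel /=; last exact: proj2_sig t'.
  case hU: (pb _).
    move/pbP: hU => hU; rewrite (hU x0 x0L) hx0 /=.
    by have -> : all (fun x => sval t' x == sval tp x) L by apply/allP => x xL; rewrite hU.
  move/pbF: hU => hU; case hh: (_ && _) => //; exfalso; apply: hU => x xL.
  by move/andP: hh => [_ /allP /(_ x xL) /eqP].
pose a := Fc (map (fun p => (f (proj1_sig p).1.1, bl p)) s).
have key : forall t' : TE, chiv (proj1_sig t') a =
    if pb (exists p, List.In p s /\ Uc p t') then f t' else 0.
  move=> t'; have ht' := proj2_sig t'; rewrite /a; clear a; elim: s {hs} => [|p s IH] /=.
    by rewrite chiv0 //; case hh: (pb _) => //; move/pbP: hh => [p [[]]].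
  rewrite chivD // chivB // chivZ // chivM // IH hbl.
  case hU: (pb (Uc p t')).
    move/pbP: hU => hU.
    have -> : pb (exists p0, (p = p0 \/ List.In p0 s) /\ Uc p0 t') = true.
      by apply/pbP; exists p; split; [left|].
    rewrite mul1r addrN addr0 mulr1.
    case: p hU {IH} => [[[tp L] x0] [hx0 [x0L hc]]] hU /=.
    by apply/esym/hc.
  move/pbF: hU => hU; rewrite mulr0 mul0r subr0 add0r.
  have -> : pb (exists p0, (p = p0 \/ List.In p0 s) /\ Uc p0 t') =
            pb (exists p0, List.In p0 s /\ Uc p0 t').
    case h2: (pb (exists p0, List.In p0 s /\ Uc p0 t')).
      by move/pbP: h2 => [p0 [h1 h2]]; apply/pbP; exists p0; split; [right|].
    move/pbF: h2 => h2; apply/pbF => [[p0 [[<-|h1] h3]]] //.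
    by apply: h2; exists p0.
  by [].
exists a; apply: functional_extensionality => t; rewrite /Phi key.
case hh: (pb _) => //; move/pbF: hh => hh.
apply: NNPP => hf; apply: hh; apply: hs => U hU Ut.
by exists t; split => // h; apply: hf; rewrite h.
Qed.

Lemma iso_part : alg_iso_Cc mul tauE.
Proof.
exists Phi; split.
  move=> a b hab; apply/subr0_eq; apply: sep => phi ht.
  by have := congr1 (fun F => F (exist _ phi ht)) hab; rewrite /Phi /= chivB // => ->; rewrite subrr.
split; first exact: Cc_Phi.
split; first exact: surj_Phi.
split; first by move=> x y t; rewrite /Phi chivD //; exact: proj2_sig t.
split; first by move=> k x t; rewrite /Phi chivZ //; exact: proj2_sig t.
by move=> x y t; rewrite /Phi chivM //; exact: proj2_sig t.
Qed.

End Main.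

Theorem proposition15p14
  (d : Order.disp_t) (E : bMeetSemilatticeType d)
  (K : fieldType) (A : lmodType K) (mul : A -> A -> A)
  (hA : is_algebra mul)
  (pi : E -> A)
  (hpi0 : pi \bot%O = 0)
  (hpiM : forall x y : E, pi (x `&` y)%O = mul (pi x) (pi y))
  (hgen : generates mul (fun a => exists x : E, a = pi x)) :
  homeomorphic
    (subspace_top (pointwise_top A K) (is_alg_character mul))
    (subspace_top (pointwise_top E bool) (tight_character mul pi))
  /\
  alg_iso_Cc mul (subspace_top (pointwise_top E bool) (tight_character mul pi)).
Proof.
split.
  exact: (homeo_part hA hpi0 hpiM hgen).
exact: (iso_part hA hpi0 hpiM hgen).
Qed.
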